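(* Let $G=(V,E)$ be a network, $\Sigma$ an alphabet, $D\subseteq\Sigma^{|V|}$ and $f\colon D\to\Sigma^{|V|}$. Suppose $\mathscr{P}$ is a $T$-round quantum LOCAL protocol on $G$ such that for every input $x\in D$ (node $u$ receiving $x_u$), with probability strictly larger than $1/2$ every node $u\in V$ outputs $f(x)_u$. Then there exists a $T$-round deterministic classical LOCAL protocol on $G$ in which, for every $x\in D$, every node $u\in V$ outputs $f(x)_u$.
   Context: LOCAL model: synchronous rounds on an undirected graph; each node has a distinct identifier, knows its incident edges and the number of nodes, and in each round may do arbitrary local computation and send one message of unbounded size to each neighbour. In the quantum LOCAL model processors are quantum and messages are quantum states, with no initial shared entanglement; in the classical model processors and messages are classical. *)

(* Defs.v *)
From HB Require Import structures.
From mathcomp Require Import all_boot all_order all_algebra.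
From mathcomp Require Import complex.
From mathcomp Require Import Rstruct.
Set Implicit Arguments. Unset Strict Implicit. Unset Printing Implicit Defensive.
Import Order.TTheory GRing.Theory Num.Theory.
Local Open Scope ring_scope.

Definition C : numClosedFieldType := complex Rdefinitions.R.

(* ---------- Network ----------
   The network G = (V,E) is V = 'I_n (node v has identifier v) with a
   symmetric irreflexive adjacency relation e : rel 'I_n.                  *)

(* ---------- Quantum registers ----------
   A T-round quantum protocol uses:
   - a private memory register  inl v  for every node v (initially |0>),
   - a message register  inr (t, v, w)  carrying the quantum message sent by
     v to w in round t (t < T), used only when e v w.
   Register r has dimension  dim r + 1  (arbitrary, chosen by the protocol).*)
Definition reg (n T : nat) : finType := ('I_n + ('I_T * 'I_n * 'I_n))%type.

(* computational basis of the global Hilbert space *)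
Definition basis (n T : nat) (dim : reg n T -> nat) : finType :=
  {dffun forall r : reg n T, 'I_(dim r).+1}.

Definition op n T (dim : reg n T -> nat) := basis dim -> basis dim -> C.

Section Ops.
Variables (n T : nat) (dim : reg n T -> nat).
Local Notation B := (basis dim).
Local Notation Op := (op dim).

Definition mulop (A B' : Op) : Op := fun a c => \sum_(b : B) A a b * B' b c.
Definition adjop (A : Op) : Op := fun a b => (A b a)^*.
Definition idop : Op := fun a b => (a == b)%:R.
Definition trace (A : Op) : C := \sum_(a : B) A a a.

Definition agree (S : {set reg n T}) (a b : B) := forall r, r \in S -> a r = b r.

(* L only depends on the S-components of its indices: L is an operator on
   the subsystem S *)
Definition onS (S : {set reg n T}) (L : Op) :=
  forall a b a' b', agree S a a' -> agree S b b' -> L a b = L a' b'.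

(* L (acting on S) tensored with the identity on the other registers *)
Definition lift (S : {set reg n T}) (L : Op) : Op :=
  fun a b => if [forall r in ~: S, a r == b r] then L a b else 0.

Definition psd (A : Op) :=
  forall psi : B -> C, 0 <= \sum_(a : B) \sum_(b : B) (psi a)^* * A a b * psi b.

Definition chan (S : {set reg n T}) (ks : seq Op) (rho : Op) : Op :=
  fun a b => \sum_(K <- ks) mulop (mulop (lift S K) rho) (adjop (lift S K)) a b.

(* initial global state |0...0><0...0| : no shared entanglement *)
Definition zero_basis : B := [ffun r => ord0].
Definition rho0 : Op := fun a b => ((a == zero_basis) && (b == zero_basis))%:R.
End Ops.

(* Registers held by node v in computation phase t (phase t < T is round t:
   v holds its memory, the messages it received in round t-1 and the
   (empty) registers of the messages it sends in round t; phase T is the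
   final local computation/measurement). *)
Definition held n T (e : rel 'I_n) (t : nat) (v : 'I_n) : {set reg n T} :=
  [set r : reg n T | match r with
           | inl w => w == v
           | inr (t', w, u) => let t' := nat_of_ord t' in
               (((t'.+1 == t)%N && (u == v)) && e w u)
               || (((t' == t :> nat) && (w == v)) && e w u)
           end].

(* A T-round quantum LOCAL protocol with inputs/outputs in Sigma:
   in round t node v (knowing its identifier v, n, and its input s) applies a
   channel given by Kraus operators on the registers it holds; at the end it
   performs a POVM (outcomes in Sigma) on the registers it holds. *)
Record qprotocol (n T : nat) (Sigma : finType) := QProtocol {
  qdim : reg n T -> nat;
  qkraus : 'I_T -> 'I_n -> Sigma -> seq (op qdim);
  qpovm : 'I_n -> Sigma -> Sigma -> op qdim }.
Arguments qdim {n T Sigma} q _.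
Arguments qkraus {n T Sigma} q _ _ _.
Arguments qpovm {n T Sigma} q _ _ _.

Definition qvalid n T (Sigma : finType) (e : rel 'I_n) (P : qprotocol n T Sigma) :=
  [/\ (forall (t : 'I_T) v s K, List.In K (qkraus P t v s) -> onS (held T e t v) K),
      (forall (t : 'I_T) v s,
          forall a b, \sum_(K <- qkraus P t v s)
             mulop (adjop (lift (held T e t v) K)) (lift (held T e t v) K) a b
          = @idop _ _ (qdim P) a b),
      (forall v s o, onS (held T e T v) (qpovm P v s o)),
      (forall v s o, psd (qpovm P v s o)) &
      (forall v s a b, \sum_(o : Sigma) lift (held T e T v) (qpovm P v s o) a b
                   = @idop _ _ (qdim P) a b)].

(* global state after all T rounds on input x (nodes of a round act on
   disjoint registers, so the order within a round is irrelevant) *)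
Definition qround n T (Sigma : finType) (e : rel 'I_n) (P : qprotocol n T Sigma)
    (x : {ffun 'I_n -> Sigma}) (t : 'I_T) (rho : op (qdim P)) : op (qdim P) :=
  foldl (fun r v => chan (held T e t v) (qkraus P t v (x v)) r) rho (enum 'I_n).
Arguments qround {n T Sigma} e P x t rho.

Definition qfinal n T (Sigma : finType) (e : rel 'I_n) (P : qprotocol n T Sigma)
    (x : {ffun 'I_n -> Sigma}) : op (qdim P) :=
  foldl (fun rho t => qround e P x t rho) (@rho0 _ _ (qdim P)) (enum 'I_T).
Arguments qfinal {n T Sigma} e P x.

Definition qprob n T (Sigma : finType) (e : rel 'I_n) (P : qprotocol n T Sigma)
    (x y : {ffun 'I_n -> Sigma}) : C :=
  trace (mulop (qfinal e P x)
     (foldr (fun v A => mulop (lift (held T e T v) (qpovm P v (x v) (y v))) A)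
            (@idop _ _ (qdim P)) (enum 'I_n))).

Record cprotocol (n : nat) (Sigma : Type) (M St : Type) := CProtocol {
  cinit : 'I_n -> Sigma -> St;
  csend : nat -> 'I_n -> 'I_n -> St -> M;          (* round, sender, receiver *)
  cupd  : nat -> 'I_n -> St -> ('I_n -> option M) -> St;
  cout  : 'I_n -> St -> Sigma }.

Fixpoint cstate n (Sigma M St : Type) (e : rel 'I_n) (Q : cprotocol n Sigma M St)
    (x : 'I_n -> Sigma) (t : nat) (v : 'I_n) : St :=
  match t with
  | 0 => cinit Q v (x v)
  | t'.+1 => cupd Q t' v (cstate e Q x t' v)
      (fun w => if e w v then Some (csend Q t' w v (cstate e Q x t' w)) else None)
  end.

Definition crun n (Sigma M St : Type) (e : rel 'I_n) (Q : cprotocol n Sigma M St)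
    (T : nat) (x : 'I_n -> Sigma) (v : 'I_n) : Sigma :=
  cout Q v (cstate e Q x T v).

(* Main.v *)
Require Import Defs.
From HB Require Import structures.
From mathcomp Require Import all_boot all_order all_algebra.
From mathcomp Require Import complex.
From Stdlib Require Import FunctionalExtensionality.
From mathcomp Require Import zify ring.
Import Order.TTheory GRing.Theory Num.Theory.
Set Implicit Arguments. Unset Strict Implicit. Unset Printing Implicit Defensive.
Local Open Scope ring_scope.

Section Gram.
Variables (CC : numClosedFieldType) (I : finType).

Definition gram (A : I -> I -> CC) :=
  exists s : seq (I -> CC), forall a b, A a b = \sum_(g <- s) g a * (g b)^*.

Lemma gram_mul A A' : gram A -> gram A' -> gram (fun a b => A a b * A' a b).
Proof.
move=> [s H] [s' H']; exists [seq (fun a => g a * h a) | g <- s, h <- s'] => a b.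
rewrite big_allpairs_dep /= H H' big_distrl /=; apply: eq_bigr => g _.
rewrite big_distrr /=; apply: eq_bigr => h _.
by rewrite rmorphM /= mulrACA.
Qed.

Lemma gram_one : gram (fun _ _ => 1).
Proof. by exists [:: fun _ => 1] => a b; rewrite big_cons big_nil addr0 conjC1 mulr1. Qed.

Lemma gram_prod J (r : seq J) (F : J -> I -> I -> CC) :
  (forall j, gram (F j)) -> gram (fun a b => \prod_(j <- r) F j a b).
Proof.
move=> H; elim: r => [|j r IH].
  by have [s Hs] := gram_one; exists s => a b; rewrite big_nil; apply: Hs.
have [s Hs] := gram_mul (H j) IH; exists s => a b; rewrite big_cons Hs //.
Qed.

Lemma gram_ind (pi : I -> I) : gram (fun a b => (pi a == pi b)%:R).
Proof.
exists [seq (fun a => (pi a == z)%:R) | z <- enum I] => a b.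
rewrite big_map big_enum /= (bigD1 (pi a)) //= eqxx mul1r conjC_nat.
rewrite big1 ?addr0; first by rewrite eq_sym.
by move=> z /negbTE; rewrite eq_sym => ->; rewrite mul0r.
Qed.

Lemma trace_gram A M : gram A -> gram M -> 0 <= \sum_a \sum_b A a b * M b a.
Proof.
move=> [s H] [s' H'].
have -> : \sum_a \sum_b A a b * M b a =
   \sum_(g <- s) \sum_(h <- s') ((\sum_a g a * (h a)^*)^* * (\sum_a g a * (h a)^*)).
  transitivity (\sum_a \sum_b \sum_(g <- s) \sum_(h <- s') (g a * (g b)^* * (h b * (h a)^*))).
    apply: eq_bigr => a _; apply: eq_bigr => b _.
    rewrite H H' big_distrl /=; apply: eq_bigr => g _.
    by rewrite big_distrr.
  rewrite exchange_big /=.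
  under eq_bigr do rewrite exchange_big /=.
  rewrite exchange_big /=; apply: eq_bigr => g _.
  under eq_bigr do rewrite exchange_big /=.
  rewrite exchange_big /=; apply: eq_bigr => h _.
  rewrite rmorph_sum big_distrl /=; apply: eq_bigr => a _.
  rewrite big_distrr /=; apply: eq_bigr => b _.
  rewrite rmorphM /= conjCK.
  ring.
apply: sumr_ge0 => g _; apply: sumr_ge0 => h _; rewrite mulrC; exact: mul_conjC_ge0.
Qed.


Definition quad (A : I -> I -> CC) (psi : I -> CC) :=
  \sum_a \sum_b (psi a)^* * A a b * psi b.

Lemma sumd (F : I -> CC) a : \sum_x (x == a)%:R * F x = F a.
Proof.
rewrite (bigD1 a) // eqxx mul1r big1_seq /=; first by rewrite addr0.
by move=> x /andP[/negbTE -> _]; rewrite mul0r.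
Qed.

Lemma dd (A : I -> I -> CC) a b c d :
  \sum_x \sum_y ((x == a)%:R * c) * A x y * ((y == b)%:R * d) = c * A a b * d.
Proof.
transitivity (\sum_x (x == a)%:R * (\sum_y (y == b)%:R * (c * A x y * d))).
  apply: eq_bigr => x _; rewrite big_distrr; apply: eq_bigr => y _ /=; ring.
under eq_bigr do rewrite sumd.
by rewrite sumd.
Qed.

Lemma quad2 A a b al be :
  quad A (fun x => (x == a)%:R * al + (x == b)%:R * be) =
  al^* * al * A a a + al^* * be * A a b + be^* * al * A b a + be^* * be * A b b.
Proof.
rewrite /quad.
transitivity (\sum_x \sum_y (
   ((x == a)%:R * al^*) * A x y * ((y == a)%:R * al) +
   ((x == a)%:R * al^*) * A x y * ((y == b)%:R * be) +
   ((x == b)%:R * be^*) * A x y * ((y == a)%:R * al) +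
   ((x == b)%:R * be^*) * A x y * ((y == b)%:R * be))).
  apply: eq_bigr => x _; apply: eq_bigr => y _.
  rewrite rmorphD !rmorphM /= !conjC_nat; ring.
under eq_bigr do rewrite !big_split /=.
rewrite !big_split /= !dd; ring.
Qed.

Lemma rearr (x y z w : CC) : x * (y * z) * w = x * y * (w * z).
Proof. ring. Qed.

Lemma from_eq (x y u v : CC) : x = y -> u - v = x - y -> u = v.
Proof. by move=> ->; rewrite subrr => /eqP; rewrite subr_eq0 => /eqP. Qed.

Lemma psd_herm A : (forall psi, 0 <= quad A psi) -> forall a b, A a b = (A b a)^*.
Proof.
move=> H a b.
have Haa : forall c, (A c c)^* = A c c.
  move=> c; have := geC0_conj (H (fun x => (x == c)%:R * 1 + (x == c)%:R * 0)).
  rewrite quad2 !rmorphD !rmorphM /= conjC1 conjC0 ?conjCK => h.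
  by apply: (from_eq h); ring.
have E1 : (A a b)^* + (A b a)^* = A a b + A b a.
  have := geC0_conj (H (fun x => (x == a)%:R * 1 + (x == b)%:R * 1)).
  rewrite quad2 !rmorphD !rmorphM /= conjC1 ?conjCK Haa Haa => h.
  by apply: (from_eq h); ring.
have E2 : - 'i * (A a b)^* + 'i * (A b a)^* = 'i * A a b - 'i * A b a.
  have := geC0_conj (H (fun x => (x == a)%:R * 1 + (x == b)%:R * 'i)).
  rewrite quad2 !rmorphD !rmorphM /= conjC1 ?conjCK Haa Haa conjCi => h.
  by apply: (from_eq h); ring.
have H2 : (A a b - (A b a)^*) * (2%:R * 'i) =
   ('i * (A a b + A b a) + ('i * A a b - 'i * A b a)) -
   ('i * ((A a b)^* + (A b a)^*) + (- 'i * (A a b)^* + 'i * (A b a)^*)) by ring.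
rewrite E1 E2 subrr in H2.
move/eqP: H2; rewrite mulf_eq0 mulf_eq0 pnatr_eq0 (negbTE (neq0Ci _)) /= orbF.
by rewrite subr_eq0 => /eqP.
Qed.


Lemma psd_gram A : (forall psi, 0 <= quad A psi) -> gram A.
Proof.
move=> H.
have Hh := psd_herm H.
pose M : 'M[CC]_#|I| := \matrix_(i, j) A (enum_val i) (enum_val j).
have MH : (M ^t*)%sesqui = M.
  by apply/matrixP => i j; rewrite !mxE -Hh.
have Mn : M \is normalmx by apply/normalmxP; rewrite MH.
have /orthomx_spectralP ME := Mn.
have /unitarymxP PU := spectral_unitarymx M.
rewrite invmx_unitary ?spectral_unitarymx // in ME.
set P := spectralmx M in ME PU.
set d := spectral_diag M in ME.
have D : P *m M *m (P ^t*)%sesqui = diag_mx d.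
  rewrite ME !mulmxA PU mul1mx -mulmxA PU mulmx1 //.
have bij := onW_bij predT (@enum_val_bij I).
have dge0 : forall l, 0 <= d 0 l.
  move=> l; have := H (fun a => (P l (enum_rank a))^*).
  have -> : quad A (fun a => (P l (enum_rank a))^*) = (P *m M *m (P ^t*)%sesqui) l l.
    rewrite /quad exchange_big mxE (reindex _ bij) /=.
    apply: eq_bigr => i _; rewrite mxE big_distrl (reindex _ bij) /=.
    apply: eq_bigr => j _; rewrite !mxE !enum_valK conjCK //.
  by rewrite D mxE eqxx mulr1n.
exists [seq (fun a => sqrtC (d 0 l) * (P l (enum_rank a))^*) | l <- enum 'I_#|I|] => a b.
rewrite big_map big_enum /=.
have -> : A a b = M (enum_rank a) (enum_rank b) by rewrite mxE !enum_rankK.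
rewrite ME mxE; apply: eq_bigr => l _.
rewrite mul_mx_diag !mxE rmorphM /= conjCK.
have hs : (sqrtC (d 0 l))^* = sqrtC (d 0 l) by apply: geC0_conj; rewrite sqrtC_ge0.
rewrite hs -[d 0 l in LHS]sqrtCK expr2; ring.
Qed.

End Gram.

Section Ops.
Variables (n T : nat) (dim : reg n T -> nat).
Local Notation B := (basis dim).
Local Notation Op := (op dim).
Local Notation lft := (@Defs.lift n T dim).
Local Notation id1 := (@idop n T dim).

Definition sumop I (r : seq I) (F : I -> Op) : Op := fun a b => \sum_(i <- r) F i a b.

Lemma mulopA (X Y Z : Op) : mulop (mulop X Y) Z = mulop X (mulop Y Z).
Proof.
apply: functional_extensionality => a; apply: functional_extensionality => d.
rewrite /mulop.
under eq_bigr do rewrite big_distrl /=.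
rewrite exchange_big /=; apply: eq_bigr => c _; rewrite big_distrr /=.
by apply: eq_bigr => b _; rewrite mulrA.
Qed.

Lemma mulop_sumr I (r : seq I) (F : I -> Op) (X : Op) :
  mulop X (sumop r F) = sumop r (fun i => mulop X (F i)).
Proof.
apply: functional_extensionality => a; apply: functional_extensionality => d.
rewrite /mulop /sumop.
under eq_bigr do rewrite big_distrr /=.
by rewrite exchange_big.
Qed.

Lemma mulop_suml I (r : seq I) (F : I -> Op) (X : Op) :
  mulop (sumop r F) X = sumop r (fun i => mulop (F i) X).
Proof.
apply: functional_extensionality => a; apply: functional_extensionality => d.
rewrite /mulop /sumop.
under eq_bigr do rewrite big_distrl /=.
by rewrite exchange_big.
Qed.

Lemma mulop1 (X : Op) : mulop X id1 = X.
Proof.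
apply: functional_extensionality => a; apply: functional_extensionality => d.
rewrite /mulop /idop (bigD1 d) // eqxx mulr1.
rewrite big1_seq /=; first by rewrite addr0.
by move=> b /andP[/negbTE bd _]; rewrite bd mulr0.
Qed.

Lemma mul1op (X : Op) : mulop id1 X = X.
Proof.
apply: functional_extensionality => a; apply: functional_extensionality => d.
rewrite /mulop /idop (bigD1 a) // eqxx mul1r big1_seq /=; first by rewrite addr0.
move=> b /andP[/negbTE bd _].
by rewrite eq_sym bd mul0r.
Qed.

Lemma adjop_mul (X Y : Op) : adjop (mulop X Y) = mulop (adjop Y) (adjop X).
Proof.
apply: functional_extensionality => a; apply: functional_extensionality => d.
rewrite /adjop /mulop rmorph_sum; apply: eq_bigr => b _.
by rewrite rmorphM mulrC.
Qed.

Lemma adjopK (X : Op) : adjop (adjop X) = X.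
Proof.
apply: functional_extensionality => a; apply: functional_extensionality => d.
by rewrite /adjop conjCK.
Qed.

Lemma trace_mulC (X Y : Op) : trace (mulop X Y) = trace (mulop Y X).
Proof.
rewrite /trace /mulop exchange_big; apply: eq_bigr => a _.
by apply: eq_bigr => b _; rewrite mulrC.
Qed.

Lemma trace_sum I (r : seq I) (F : I -> Op) :
  trace (sumop r F) = \sum_(i <- r) trace (F i).
Proof. by rewrite /trace /sumop exchange_big. Qed.

Definition chanH (S : {set reg n T}) (ks : seq Op) (X : Op) : Op :=
  sumop ks (fun K => mulop (mulop (adjop (lft S K)) X) (lft S K)).

Lemma chanE S ks rho :
  chan S ks rho = sumop ks (fun K => mulop (mulop (lft S K) rho) (adjop (lft S K))).
Proof. by []. Qed.

Lemma trace_chan S ks rho X :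
  trace (mulop (chan S ks rho) X) = trace (mulop rho (chanH S ks X)).
Proof.
rewrite chanE mulop_suml trace_sum /chanH mulop_sumr trace_sum.
apply: eq_bigr => K _.
by rewrite !mulopA trace_mulC !mulopA.
Qed.


Definition patch (S : {set reg n T}) (c a : B) : B :=
  @finfun _ (fun r => 'I_(dim r).+1) (fun r => if r \in S then c r else a r).

Lemma patchE S c a r : patch S c a r = if r \in S then c r else a r.
Proof. by rewrite /patch ffunE. Qed.

Definition offb (U : {set reg n T}) (a c : B) : bool :=
  [forall r, (r \notin U) ==> (a r == c r)].

Lemma lift_prod S R K L : onS S K -> onS R L -> [disjoint S & R] ->
  mulop (lft S K) (lft R L) =
  fun a c => (offb (S :|: R) a c)%:R * (K a c * L a c).
Proof.
move=> oK oL dSR.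
apply: functional_extensionality => a; apply: functional_extensionality => c.
rewrite /mulop /Defs.lift (bigD1 (patch S c a)) //.
rewrite big1_seq /=; last first.
  move=> b /andP[bb _].
  case: ifP => [/forallP H1|]; last by rewrite mul0r.
  case: ifP => [/forallP H2|]; last by rewrite mulr0.
  case/eqP: bb; apply/ffunP => r; rewrite patchE.
  case: ifP => rS.
    have rR : r \in ~: R by rewrite inE (disjointFr dSR rS).
    by move: (H2 r); rewrite rR => /eqP.
  have rS' : r \in ~: S by rewrite inE rS.
  by move: (H1 r); rewrite rS' => /eqP.
rewrite addr0.
have -> : [forall r in ~: S, a r == patch S c a r].
  by apply/forallP => r; apply/implyP; rewrite inE patchE => /negbTE ->.
have -> : K a (patch S c a) = K a c.
  by apply: oK => // r rS; rewrite patchE rS.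
have -> : L (patch S c a) c = L a c.
  apply: oL => // r rR; rewrite patchE.
  by rewrite (disjointFl dSR rR).
have -> : [forall r in ~: R, patch S c a r == c r] = offb (S :|: R) a c.
  apply/forallP/forallP => H r.
    apply/implyP; rewrite !inE negb_or => /andP[rS rR].
    by move: (H r); rewrite inE rR patchE (negbTE rS).
  apply/implyP; rewrite inE => rR; rewrite patchE.
  case: ifP => rS //.
  by move: (H r); rewrite !inE rS (negbTE rR).
by case: (offb _ a c); rewrite /= ?mul1r ?mul0r ?mulr0.
Qed.

Lemma lift_comm S R K L : onS S K -> onS R L -> [disjoint S & R] ->
  mulop (lft S K) (lft R L) = mulop (lft R L) (lft S K).
Proof.
move=> oK oL dSR; rewrite (lift_prod oK oL dSR).
rewrite disjoint_sym in dSR; rewrite (lift_prod oL oK dSR).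
apply: functional_extensionality => a; apply: functional_extensionality => c.
by rewrite setUC [K a c * _]mulrC.
Qed.


Implicit Types (R S : {set reg n T}) (K L M X Y rho : Op).

Lemma disjP (A B' : {set reg n T}) :
  (forall r, r \in A -> r \in B' -> False) -> [disjoint A & B'].
Proof.
move=> H; rewrite disjoints_subset; apply/subsetP => r rA; rewrite inE.
by apply/negP => /(H r rA).
Qed.

Definition local (R : {set reg n T}) (X : Op) :=
  forall (S : {set reg n T}) (M : Op), [disjoint S & R] -> onS S M -> mulop X (lft S M) = mulop (lft S M) X.

Lemma local_sub R R' X : R \subset R' -> local R X -> local R' X.
Proof.
move=> sub H S M d oM; apply: H oM.
apply: disjP => r rS rR.
by move: (disjointFr d rS); rewrite (subsetP sub r rR).
Qed.

Lemma onS_sub S S' K : S \subset S' -> onS S K -> onS S' K.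
Proof.
move=> sub oK a b a' b' h1 h2; apply: oK => r rS.
  by apply: h1; apply: (subsetP sub).
by apply: h2; apply: (subsetP sub).
Qed.

Lemma local_lift S K : onS S K -> local S (lft S K).
Proof.
move=> oK S' M d oM; apply: lift_comm => //; by rewrite disjoint_sym.
Qed.

Lemma adjop_lift S K : adjop (lft S K) = lft S (adjop K).
Proof.
apply: functional_extensionality => a; apply: functional_extensionality => c.
rewrite /adjop /Defs.lift.
have -> : [forall r in ~: S, c r == a r] = [forall r in ~: S, a r == c r].
  by apply: eq_forallb => r; rewrite eq_sym.
by case: ifP; rewrite ?conjC0.
Qed.

Lemma onS_adj S K : onS S K -> onS S (adjop K).
Proof. by move=> oK a b a' b' h1 h2; rewrite /adjop (oK b a b' a'). Qed.

Lemma eq_sumop I (r : seq I) (F G : I -> Op) :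
  (forall i, List.In i r -> F i = G i) -> sumop r F = sumop r G.
Proof.
move=> H; apply: functional_extensionality => a; apply: functional_extensionality => c.
rewrite /sumop; elim: r H => [|i r IH] H; first by rewrite !big_nil.
rewrite !big_cons (H i) /=; last by left.
by rewrite IH // => j jr; apply: H; right.
Qed.

Lemma chanH_id S ks X R :
  sumop ks (fun K => mulop (adjop (lft S K)) (lft S K)) = id1 ->
  (forall K, List.In K ks -> onS S K) ->
  local R X -> [disjoint S & R] -> chanH S ks X = X.
Proof.
move=> compl oks lX d.
rewrite /chanH (@eq_sumop _ _ _ (fun K => mulop (mulop (adjop (lft S K)) (lft S K)) X)).
  by rewrite -mulop_suml compl mul1op.
by move=> K Kin; rewrite !mulopA (lX S K d (oks K Kin)).
Qed.

Lemma chanH_local S ks X R :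
  (forall K, List.In K ks -> onS S K) ->
  local R X -> S \subset R -> local R (chanH S ks X).
Proof.
move=> oks lX sub S' M d oM.
rewrite /chanH mulop_suml mulop_sumr; apply: eq_sumop => K Kin.
have dS : [disjoint S & S'].
  apply: disjP => r rS rS'.
  by move: (disjointFr d rS'); rewrite (subsetP sub r rS).
have oK := oks K Kin.
have e1 := lift_comm oK oM dS.
have e2 := lX S' M d oM.
have e3 := lift_comm (onS_adj oK) oM dS.
rewrite -adjop_lift in e3.
rewrite !mulopA e1 -(mulopA X) e2 mulopA -(mulopA (adjop _)) e3.
by rewrite !mulopA.
Qed.

Lemma trace_foldl I (F G : I -> Op -> Op) (l : seq I) (rho X : Op) :
  (forall i r Y, trace (mulop (F i r) Y) = trace (mulop r (G i Y))) ->
  trace (mulop (foldl (fun r i => F i r) rho l) X) =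
  trace (mulop rho (foldr G X l)).
Proof.
move=> H; elim: l rho => [|i l IH] rho //=.
by rewrite IH H.
Qed.

End Ops.

Fixpoint know n (e : rel 'I_n) (s : nat) (u : 'I_n) : {set 'I_n} :=
  match s with
  | 0 => [set u]
  | s'.+1 => know e s' u :|: \bigcup_(y | e y u) know e s' y
  end.

Section Know.
Variables (n : nat) (e : rel 'I_n).

Lemma know_self s u : u \in know e s u.
Proof. by elim: s => [|s IH] /=; rewrite ?inE ?eqxx // IH. Qed.

Lemma know_le s s' u : (s <= s')%N -> know e s u \subset know e s' u.
Proof.
move=> /subnK <-; elim: (s' - s)%N => [|k IH] //=.
by apply: (subset_trans IH); apply: subsetUl.
Qed.

Lemma know_adj s u v w : w \in know e s u -> e v w -> v \in know e s.+1 u.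
Proof.
elim: s u w => [|s IH] u w /=.
  rewrite inE => /eqP -> evu; rewrite !inE; apply/orP; right.
  by apply/bigcupP; exists v => //; rewrite inE.
rewrite inE => /orP[wk | /bigcupP[y ey wk]] evw.
  by rewrite inE (IH u w wk evw).
rewrite inE; apply/orP; right; apply/bigcupP; exists y => //.
exact: (IH y w wk evw).
Qed.
End Know.

Section LightCone.
Variables (n T : nat) (e : rel 'I_n) (u : 'I_n).

Definition Good (s : nat) : {set reg n T} :=
  [set r : reg n T | match r with
     | inl w => w \in know e (T - s) u
     | inr (t', w, z) => (s <= t'.+1)%N && ((t'.+1 == s)%N ==> (z \in know e (T - s) u))
     end].

Lemma good_a (t : nat) v : (t < T)%N -> v \notin know e (T - t) u ->
  forall r : reg n T, r \in held T e t v -> r \in Good t.+1 -> False.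
Proof.
move=> tT vk [w | [[t' w] z]]; rewrite !inE.
  move=> /eqP -> vk'; move/negP: vk; apply.
  by apply: (subsetP (know_le _ _ _)) vk'; apply: leq_sub2l.
case/orP => /andP[/andP[h1 h2] h3].
  by move: h1 => /eqP <- /andP[]; rewrite ltnn.
move: h1 h2 => /eqP h1 /eqP h2; subst.
rewrite eqxx ltnSn /= => zk; move/negP: vk; apply.
have := know_adj zk h3; rewrite subnSK //.
Qed.

Lemma held_disj t v w : v != w ->
  forall r : reg n T, r \in held T e t v -> r \in held T e t w -> False.
Proof.
move=> /negbTE vw [w' | [[t' w'] z]]; rewrite !inE.
  by move=> /eqP -> /eqP; apply/eqP; rewrite vw.
case/orP => /andP[/andP[h1 h2] h3]; case/orP => /andP[/andP[h1' h2'] h3'].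
- by move: h2 h2' => /eqP -> /eqP; apply/eqP; rewrite vw.
- by move: h1 h1' => /eqP <- /eqP; lia.
- by move: h1 h1' => /eqP -> /eqP; lia.
- by move: h2 h2' => /eqP -> /eqP; apply/eqP; rewrite vw.
Qed.

Lemma good_c t v : v \in know e (T - t) u -> held T e t v \subset Good t.
Proof.
move=> vk; apply/subsetP => -[w | [[t' w] z]]; rewrite !inE.
  by move=> /eqP ->.
case/orP => /andP[/andP[h1 h2] h3].
  move/eqP: h1 => h1; move/eqP: h2 => h2; subst.
  by rewrite leqnn eqxx.
move/eqP: h1 => h1; rewrite h1.
by rewrite (leqW (leqnn t)) /= eqn_leq ltnn.
Qed.

Lemma good_d t : Good t.+1 \subset Good t.
Proof.
apply/subsetP => -[w | [[t' w] z]]; rewrite !inE.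
  by apply: (subsetP (know_le _ _ _)); apply: leq_sub2l.
case/andP => h1 _; rewrite (ltnW h1) /=.
apply/implyP => /eqP h2; move: h1; rewrite h2 ltnn //.
Qed.

Lemma good_e : held T e T u \subset Good T.
Proof.
apply/subsetP => -[w | [[t' w] z]]; rewrite !inE subnn.
  by move=> /eqP ->; rewrite inE.
case/orP => /andP[/andP[h1 h2] h3].
  move/eqP: h1 => h1; move/eqP: h2 => h2; subst z.
  by rewrite h1 leqnn !eqxx inE eqxx.
by move: h1 => /eqP h1; move: (ltn_ord t'); rewrite h1 ltnn.
Qed.

Definition Gp t : {set reg n T} :=
  Good t.+1 :|: \bigcup_(v in know e (T - t) u) held T e t v.

Lemma gp_disj t v : (t < T)%N -> v \notin know e (T - t) u ->
  [disjoint held T e t v & Gp t].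
Proof.
move=> tT vk; apply: disjP => r rh; rewrite inE => /orP[rg | /bigcupP[w wk rw]].
  exact: (good_a tT vk rh rg).
apply: (held_disj _ rh rw); apply/eqP => vw; subst.
by rewrite wk in vk.
Qed.

Lemma gp_sub t v : v \in know e (T - t) u -> held T e t v \subset Gp t.
Proof.
move=> vk; apply/subsetP => r rh; rewrite inE; apply/orP; right.
by apply/bigcupP; exists v.
Qed.

Lemma gp_good t : Gp t \subset Good t.
Proof.
apply/subsetP => r; rewrite inE => /orP[rg | /bigcupP[w wk rw]].
  exact: (subsetP (good_d t)).
exact: (subsetP (good_c wk)).
Qed.

Lemma good_gp t : Good t.+1 \subset Gp t.
Proof. exact: subsetUl. Qed.

End LightCone.

Section Round.
Variables (n T : nat) (e : rel 'I_n) (Sigma : finType) (P : qprotocol n T Sigma) (u : 'I_n).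
Local Notation dim := (qdim P).
Local Notation Op := (op dim).
Hypothesis Kon : forall (t : 'I_T) v s K, List.In K (qkraus P t v s) -> onS (held T e t v) K.
Hypothesis Kcomp : forall (t : 'I_T) v s,
  sumop (qkraus P t v s) (fun K => mulop (adjop (Defs.lift (held T e t v) K))
                                        (Defs.lift (held T e t v) K)) = @idop _ _ dim.

Definition HR (x : {ffun 'I_n -> Sigma}) (t : 'I_T) (X : Op) : Op :=
  foldr (fun v Y => chanH (held T e t v) (qkraus P t v (x v)) Y) X (enum 'I_n).

Lemma HR_step (x x' : {ffun 'I_n -> Sigma}) (t : 'I_T) (X : Op) :
  (forall v, v \in know e (T - t) u -> x v = x' v) ->
  local (Good T e u t.+1) X ->
  HR x t X = HR x' t X /\ local (Good T e u t) (HR x t X).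
Proof.
move=> agr lX.
have tT : (t < T)%N := ltn_ord t.
suff H : forall l : seq 'I_n,
    local (Gp T e u t) (foldr (fun v Y => chanH (held T e t v) (qkraus P t v (x v)) Y) X l) /\
    foldr (fun v Y => chanH (held T e t v) (qkraus P t v (x v)) Y) X l =
    foldr (fun v Y => chanH (held T e t v) (qkraus P t v (x' v)) Y) X l.
  have [H1 H2] := H (enum 'I_n); split; first exact: H2.
  exact: (local_sub (gp_good T e u t) H1).
elim => [|v l [IH1 IH2]] /=.
  by split => //; apply: (local_sub (good_gp T e u t)).
rewrite -IH2.
case vk: (v \in know e (T - t) u).
  rewrite -(agr v vk); split => //.
  apply: chanH_local => //; first by move=> K; apply: Kon.
  exact: gp_sub.
have dj := gp_disj tT (negbT vk).
rewrite !(chanH_id (Kcomp _ _ _) (Kon (t:=t) (v:=v) (s:=_)) IH1 dj).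
by split.
Qed.

Lemma H_all (x x' : {ffun 'I_n -> Sigma}) (X : Op) :
  (forall v, v \in know e T u -> x v = x' v) -> local (Good T e u T) X ->
  forall (l : seq 'I_T) s, map val l = iota s (T - s) -> (s <= T)%N ->
  foldr (fun t Y => HR x t Y) X l = foldr (fun t Y => HR x' t Y) X l /\
  local (Good T e u s) (foldr (fun t Y => HR x t Y) X l).
Proof.
move=> agr lX; elim => [|t l IH] s /=.
  move=> E sT; split => //.
  have : size (iota s (T - s)) = 0%N by rewrite -E.
  rewrite size_iota => /eqP; rewrite subn_eq0 => Ts.
  by have -> : s = T by apply/eqP; rewrite eqn_leq sT Ts.
case E: (T - s)%N => [|k] //= [ts ml] sT.
have kE : k = (T - s.+1)%N by rewrite subnS E.
have sT' : (s < T)%N by rewrite -ts ltn_ord.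
have [IH1 IH2] := IH s.+1 (etrans ml (congr1 _ kE)) sT'.
 have agr' : forall v, v \in know e (T - t) u -> x v = x' v.
  move=> v vk; apply: agr. move: vk; apply: (subsetP (@know_le _ e _ _ u (leq_subr _ _))).

rewrite -ts in IH2.
have [H1 H2] := HR_step agr' IH2.
split; first by rewrite H1 IH1.
by rewrite -ts.
Qed.

Definition marg (x : {ffun 'I_n -> Sigma}) (o : Sigma) : C :=
  trace (mulop (qfinal e P x) (Defs.lift (held T e T u) (qpovm P u (x u) o))).

Lemma trace_final (x : {ffun 'I_n -> Sigma}) (X : Op) :
  trace (mulop (qfinal e P x) X) =
  trace (mulop (@rho0 _ _ dim) (foldr (fun t Y => HR x t Y) X (enum 'I_T))).
Proof.
rewrite /qfinal.
apply: (@trace_foldl n T dim 'I_T (fun t r => qround e P x t r) (fun t Y => HR x t Y)).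
move=> t r Y; rewrite /qround /HR.
apply: (@trace_foldl n T dim 'I_n (fun v r => chan (held T e t v) (qkraus P t v (x v)) r)
          (fun v Y => chanH (held T e t v) (qkraus P t v (x v)) Y)).
by move=> v r' Y'; apply: trace_chan.
Qed.

Lemma marg_local (x x' : {ffun 'I_n -> Sigma}) o :
  (forall s o, onS (held T e T u) (qpovm P u s o)) ->
  (forall v, v \in know e T u -> x v = x' v) -> marg x o = marg x' o.
Proof.
move=> Pon agr; rewrite /marg !trace_final.
have -> : x' u = x u by rewrite agr // know_self.
have lX : local (Good T e u T) (Defs.lift (held T e T u) (qpovm P u (x u) o)).
  exact: (local_sub (good_e T e u) (local_lift (Pon _ _))).
have ml0 : map val (enum 'I_T) = iota 0 (T - 0) by rewrite val_enum_ord subn0.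
have [H1 _] := H_all agr lX ml0 (leq0n _).
by rewrite H1.
Qed.

End Round.

Section Ops2.
Variables (n T : nat) (dim : reg n T -> nat).
Local Notation B := (basis dim).
Local Notation Op := (op dim).
Local Notation lft := (@Defs.lift n T dim).
Local Notation id1 := (@idop n T dim).
Implicit Types (R S U : {set reg n T}) (K L M X Y rho : Op).

Lemma liftE U L a c : lft U L a c = (offb U a c)%:R * L a c.
Proof.
rewrite /Defs.lift /offb.
have -> : [forall r in ~: U, a r == c r] = [forall r, (r \notin U) ==> (a r == c r)].
  by apply: eq_forallb => r; rewrite inE.
by case: ifP; rewrite ?mul1r ?mul0r.
Qed.

Lemma lift_prod2 S R K L : onS S K -> onS R L -> [disjoint S & R] ->
  mulop (lft S K) (lft R L) = lft (S :|: R) (fun a c => K a c * L a c).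
Proof.
move=> oK oL d; rewrite (lift_prod oK oL d).
apply: functional_extensionality => a; apply: functional_extensionality => c.
by rewrite liftE.
Qed.

Lemma onS_prod J (l : seq J) (S : J -> {set reg n T}) (F : J -> Op) :
  (forall j, onS (S j) (F j)) ->
  onS (\bigcup_(j <- l) S j) (fun a c => \prod_(j <- l) F j a c).
Proof.
move=> H; elim: l => [|j l IH].
  by move=> a b a' b' _ _; rewrite !big_nil.
move=> a b a' b' h1 h2; rewrite !big_cons.
rewrite (H j a b a' b'); last first.
- by move=> r rS; apply: h2; rewrite big_cons inE rS.
- by move=> r rS; apply: h1; rewrite big_cons inE rS.
rewrite (IH a b a' b') //.
- by move=> r rS; apply: h1; rewrite big_cons inE rS orbT.
- by move=> r rS; apply: h2; rewrite big_cons inE rS orbT.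
Qed.

Lemma in_bigcup_seq J (l : seq J) (S : J -> {set reg n T}) r :
  r \in \bigcup_(j <- l) S j -> exists j, List.In j l /\ r \in S j.
Proof.
elim: l => [|j l IH]; first by rewrite big_nil inE.
rewrite big_cons inE => /orP[h | /IH [j' [h1 h2]]].
  by exists j; split => //; left.
by exists j'; split => //; right.
Qed.

Lemma id1_lift : id1 = lft set0 (fun _ _ => 1).
Proof.
apply: functional_extensionality => a; apply: functional_extensionality => c.
rewrite liftE mulr1 /idop.
have -> : offb set0 a c = (a == c) :> bool; last by [].
apply/forallP/eqP => [H | -> r]; last by rewrite eqxx implybT.
by apply/ffunP => r; move: (H r); rewrite inE => /eqP.
Qed.

Lemma In_in (J : eqType) (i : J) (l : seq J) : List.In i l -> i \in l.
Proof.
elim: l => [|j l IH] //= [-> | h]; rewrite inE ?eqxx //.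
by rewrite IH ?orbT.
Qed.

Lemma foldr_lift (J : eqType) (l : seq J) (S : J -> {set reg n T}) (F : J -> Op) :
  uniq l -> (forall i j, i != j -> [disjoint S i & S j]) ->
  (forall j, onS (S j) (F j)) ->
  foldr (fun i A => mulop (lft (S i) (F i)) A) id1 l =
  lft (\bigcup_(i <- l) S i) (fun a c => \prod_(i <- l) F i a c).
Proof.
move=> + dS oF; elim: l => [|j l IH] /=.
  move=> _; rewrite id1_lift; congr (lft _ _); first by rewrite big_nil.
  by do 2 apply: functional_extensionality => ?; rewrite big_nil.
case/andP => jl ul; rewrite IH // lift_prod2 //.
- rewrite big_cons; congr (lft _ _).
  by do 2 apply: functional_extensionality => ?; rewrite big_cons.
- exact: onS_prod.
apply: disjP => r rj /in_bigcup_seq [i [il ri]].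
have ji : j != i by apply/eqP => ji; subst; move/negP: jl; apply; apply: In_in.
by move: (disjointFr (dS j i ji) rj); rewrite ri.
Qed.

Lemma gram_lift U L : gram L -> gram (lft U L).
Proof.
move=> gL.
pose pi := fun a : B => patch U (@zero_basis _ _ dim) a.
have -> : lft U L = fun a c => (pi a == pi c)%:R * L a c.
  apply: functional_extensionality => a; apply: functional_extensionality => c.
  rewrite liftE; congr (_%:R * _); congr (nat_of_bool _).
  apply/forallP/eqP => [H | H r].
    apply/ffunP => r; rewrite !patchE; case: ifP => // rU.
    by move: (H r); rewrite rU => /eqP.
  apply/implyP => rU; move/ffunP: H => /(_ r); rewrite !patchE (negbTE rU) => ->.
  by rewrite eqxx.
have := @gram_mul C B _ _ (@gram_ind C B pi) gL. exact.
Qed.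

Lemma gram_rho0 : gram (@rho0 _ _ dim).
Proof.
exists [:: fun a : B => (a == @zero_basis _ _ dim)%:R] => a b.
rewrite big_cons big_nil addr0 conjC_nat /rho0.
by case: (a == _); case: (b == _); rewrite ?mul1r ?mul0r.
Qed.

Lemma gram_chan S ks rho : gram rho -> gram (chan S ks rho).
Proof.
move=> [s H].
exists [seq (fun a => \sum_d lft S K a d * g d) | K <- ks, g <- s] => a b.
rewrite big_allpairs_dep /chan; apply: eq_bigr => K _.
set L := lft S K.
transitivity (\sum_(g <- s) \sum_(d : B) \sum_(c : B) L a d * g d * ((L b c)^* * (g c)^*)); last first.
  apply: eq_bigr => g _; rewrite rmorph_sum big_distrl; apply: eq_bigr => d _ /=.
  rewrite big_distrr; apply: eq_bigr => c _ /=; by rewrite rmorphM.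
rewrite /mulop /adjop.
transitivity (\sum_(c : B) \sum_(d : B) \sum_(g <- s) L a d * g d * ((L b c)^* * (g c)^*)).
  apply: eq_bigr => c _; rewrite big_distrl; apply: eq_bigr => d _ /=.
  rewrite H big_distrr big_distrl; apply: eq_bigr => g _ /=; by rewrite rearr.
rewrite exchange_big [RHS]exchange_big; apply: eq_bigr => d _.
by rewrite [RHS]exchange_big.
Qed.

Lemma gram_foldl I (F : I -> Op -> Op) (l : seq I) rho :
  (forall i r, gram r -> gram (F i r)) -> gram rho -> gram (foldl (fun r i => F i r) rho l).
Proof. by move=> H; elim: l rho => [|i l IH] rho //= g; apply: IH; apply: H. Qed.

Lemma trace_sumr (J : finType) (p : pred J) rho (M : J -> Op) :
  trace (mulop rho (fun a c => \sum_(j | p j) M j a c)) =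
  \sum_(j | p j) trace (mulop rho (M j)).
Proof.
rewrite /trace /mulop.
under eq_bigr do under eq_bigr do rewrite big_distrr /=.
under eq_bigr do rewrite exchange_big /=.
by rewrite exchange_big.
Qed.

Lemma trace_rho0 : trace (mulop (@rho0 _ _ dim) id1) = 1.
Proof.
rewrite mulop1 /trace /rho0.
under eq_bigr do rewrite andbb.
rewrite (bigD1 (@zero_basis _ _ dim)) // eqxx big1_seq; first by rewrite /= addr0.
by move=> b /andP[/negbTE -> _].
Qed.

Lemma prodD1 (J : finType) (F : J -> C) u : \prod_i F i = F u * \prod_(i | i != u) F i.
Proof. by rewrite (bigD1 u). Qed.

Lemma sumD1 (J : finType) (F : J -> C) u : \sum_i F i = F u + \sum_(i | i != u) F i.
Proof. by rewrite (bigD1 u). Qed.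

Lemma sum_mull (J : finType) (p : pred J) (x : C) (F : J -> C) :
  \sum_(j | p j) x * F j = x * \sum_(j | p j) F j.
Proof. by rewrite big_distrr. Qed.

Lemma prod_inT (J : finType) (F : J -> C) : \prod_(i in J) F i = \prod_i F i.
Proof. by apply: eq_bigl. Qed.

Lemma sum_compl (Sigma : finType) S (E : Sigma -> Op) a c :
  (forall s, onS S (E s)) -> (forall a c, \sum_s lft S (E s) a c = id1 a c) ->
  \sum_s E s a c = (a == patch S c a)%:R.
Proof.
move=> oE cE.
rewrite -[RHS](cE a (patch S c a)); apply: eq_bigr => s _.
rewrite liftE.
have -> : offb S a (patch S c a).
  by apply/forallP => r; apply/implyP => rS; rewrite patchE (negbTE rS).
rewrite mul1r; apply: oE => // r rS; by rewrite patchE rS.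
Qed.

Lemma marg_sum (Sigma : finType) (S : 'I_n -> {set reg n T}) (E : 'I_n -> Sigma -> Op) u o :
  (forall i j, i != j -> [disjoint S i & S j]) -> (forall v s, onS (S v) (E v s)) ->
  (forall v a c, \sum_s lft (S v) (E v s) a c = id1 a c) ->
  forall a c,
  \sum_(y : {ffun 'I_n -> Sigma} | y u == o)
     foldr (fun v A => mulop (lft (S v) (E v (y v))) A) id1 (enum 'I_n) a c =
  lft (S u) (E u o) a c.
Proof.
move=> dS oE cE a c.
pose U := \bigcup_(i <- enum 'I_n) S i.
have step : forall y : {ffun 'I_n -> Sigma},
    foldr (fun v A => mulop (lft (S v) (E v (y v))) A) id1 (enum 'I_n) a c =
    (offb U a c)%:R * \prod_v E v (y v) a c.
  move=> y; rewrite (@foldr_lift _ (enum 'I_n) S (fun v => E v (y v)) (enum_uniq _) dS (fun v => oE v (y v))) liftE.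
  by congr (_ * _); rewrite big_enum prod_inT.
under eq_bigr do rewrite step.
rewrite sum_mull liftE.
pose F' v s := if v == u then (s == o)%:R * E v s a c else E v s a c.
have h1 : \sum_(y : {ffun 'I_n -> Sigma} | y u == o) \prod_v E v (y v) a c =
          \prod_v \sum_s F' v s.
  rewrite bigA_distr_bigA big_mkcond; apply: eq_bigr => y _.
  rewrite !(prodD1 _ u) {1}/F' eqxx.
  case: eqP => yu.
    rewrite mul1r; congr (_ * _).
    by apply: eq_bigr => v /negbTE vu; rewrite /F' vu.
  by rewrite mul0r mul0r.
rewrite h1 (prodD1 _ u).
have -> : \sum_s F' u s = E u o a c by rewrite /F' eqxx sumd.
have -> : \prod_(v | v != u) \sum_s F' v s = \prod_(v | v != u) (a == patch (S v) c a)%:R.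
  apply: eq_bigr => v /negbTE vu; rewrite /F' vu.
  exact: (sum_compl a c (oE v) (cE v)).
have UE : U = \bigcup_(i in 'I_n) S i by rewrite /U big_enum.
case Hall : [forall v, (v != u) ==> (a == patch (S v) c a)].
  have -> : \prod_(v | v != u) (a == patch (S v) c a)%:R = 1 :> C.
    apply: big1 => v vu; move/forallP: Hall => /(_ v); rewrite vu /= => /eqP <-.
    by rewrite eqxx.
  have -> : offb U a c = offb (S u) a c; last by rewrite mulr1.
  apply/forallP/forallP => H r; apply/implyP => rU.
    case rU' : (r \in U); last by move: (H r); rewrite rU' /= => /eqP ->.
    move: rU'; rewrite UE => /bigcupP [v _ rv].
    have vu : v != u by apply/eqP => vu; subst; rewrite rv in rU.
    move/forallP: Hall => /(_ v); rewrite vu /= => /eqP /ffunP /(_ r).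
    by rewrite patchE rv => ->.
  apply: (implyP (H r)); apply/negP => ru; move/negP: rU; apply.
  by rewrite UE; apply/bigcupP; exists u.
move/negbT: Hall; rewrite negb_forall => /existsP [v]; rewrite negb_imply => /andP [vu nv].
have -> : \prod_(v | v != u) (a == patch (S v) c a)%:R = 0 :> C.
  apply/eqP/prodf_eq0; exists v => //.
  by rewrite (negbTE nv).
have -> : offb (S u) a c = false; last by rewrite mulr0 mul0r mulr0.
apply/negP => /forallP H; move/negP: nv; apply; apply/eqP/ffunP => r.
rewrite patchE; case: ifP => // rv.
have rSu : r \notin S u.
  by rewrite (disjointFr (dS v u vu) rv).
by move: (H r); rewrite rSu /= => /eqP.
Qed.

End Ops2.

Lemma sumD1p (J : finType) (p : pred J) (F : J -> C) k :
  p k -> \sum_(i | p i) F i = F k + \sum_(i | p i && (i != k)) F i.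
Proof. by move=> pk; rewrite (bigD1 k). Qed.

Lemma sum_ge_term (J : finType) (p : pred J) (F : J -> C) j :
  p j -> (forall i, p i -> 0 <= F i) -> F j <= \sum_(i | p i) F i.
Proof.
move=> pj H; rewrite (sumD1p _ pj) lerDl; apply: sumr_ge0 => i /andP[pi _].
exact: H.
Qed.

Lemma sum_ge_two (J : finType) (F : J -> C) j k :
  j != k -> (forall i, 0 <= F i) -> F j + F k <= \sum_i F i.
Proof.
move=> jk H; rewrite (sumD1 _ j) lerD2l (@sumD1p _ (fun i => i != j) _ k); last by rewrite eq_sym.
rewrite lerDl; apply: sumr_ge0 => i _; exact: H.
Qed.

Section Main.
Variables (n : nat) (e : rel 'I_n) (Sigma : finType) (T : nat) (P : qprotocol n T Sigma).
Hypothesis HV : qvalid e P.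
Local Notation dim := (qdim P).

Lemma HKon : forall (t : 'I_T) v s K, List.In K (qkraus P t v s) -> onS (held T e t v) K.
Proof. by case: HV. Qed.

Lemma HKcomp : forall (t : 'I_T) v s,
  sumop (qkraus P t v s) (fun K => mulop (adjop (Defs.lift (held T e t v) K))
                                        (Defs.lift (held T e t v) K)) = @idop _ _ dim.
Proof.
case: HV => _ K2 _ _ _ t v s.
by apply: functional_extensionality => a; apply: functional_extensionality => b; apply: K2.
Qed.

Lemma dH : forall i j : 'I_n, i != j -> [disjoint held T e T i & held T e T j].
Proof. by move=> i j ij; apply: disjP => r h1 h2; exact: (held_disj ij h1 h2). Qed.

Lemma joint_ge0 (x y : {ffun 'I_n -> Sigma}) : 0 <= qprob e P x y.
Proof.
case: HV => K1 K2 P1 P2 P3.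
rewrite /qprob.
rewrite (foldr_lift (enum_uniq _) dH (fun v => P1 v (x v) (y v))).
apply: trace_gram.
- rewrite /qfinal; apply: (@gram_foldl _ _ _ _ (fun t r => qround e P x t r)); last exact: gram_rho0.
  move=> t r gr; rewrite /qround.
  apply: (@gram_foldl _ _ _ _ (fun v r => chan (held T e t v) (qkraus P t v (x v)) r)) => //.
  by move=> v r' gr'; apply: gram_chan.
- apply: gram_lift; apply: gram_prod => v; apply: psd_gram; exact: P2.
Qed.

Lemma marg_eq (x : {ffun 'I_n -> Sigma}) u o : marg e P u x o = \sum_(y : {ffun 'I_n -> Sigma} | y u == o) qprob e P x y.
Proof.
case: HV => K1 K2 P1 P2 P3.
rewrite /qprob -trace_sumr /marg; congr (trace (mulop _ _)).
apply: functional_extensionality => a; apply: functional_extensionality => c.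
have := (@marg_sum _ _ _ _ (held T e T) (fun v s => qpovm P v (x v) s) u o dH
   (fun v s => P1 v (x v) s) (fun v => P3 v (x v)) a c).
by move=> ->.
Qed.

Lemma sum_marg (x : {ffun 'I_n -> Sigma}) u : \sum_o marg e P u x o = 1.
Proof.
case: HV => K1 K2 P1 P2 P3.
rewrite /marg -trace_sumr.
have -> : (fun a c => \sum_o Defs.lift (held T e T u) (qpovm P u (x u) o) a c) = @idop _ _ dim.
  by apply: functional_extensionality => a; apply: functional_extensionality => c; apply: P3.
rewrite trace_final.
have -> : foldr (fun t Y => HR e x t Y) (@idop _ _ dim) (enum 'I_T) = @idop _ _ dim.
  elim: (enum 'I_T) => //= t l ->; rewrite /HR.
  elim: (enum 'I_n) => //= v l' ->.
  rewrite /chanH -[RHS](HKcomp t v (x v)); apply: eq_sumop => K _.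
  by rewrite mulop1.
exact: trace_rho0.
Qed.

Lemma qlocal (D : pred {ffun 'I_n -> Sigma}) (f : {ffun 'I_n -> Sigma} -> {ffun 'I_n -> Sigma}) :
  (forall x, D x -> ((1 / 2 : C) < qprob e P x (f x))%R) ->
  forall x x' u, D x -> D x' -> (forall v, v \in know e T u -> x v = x' v) ->
  f x u = f x' u.
Proof.
move=> Hp x x' u Dx Dx' agr.
have P1 : forall s o, onS (held T e T u) (qpovm P u s o) by case: HV.
have mge0 : forall o, 0 <= marg e P u x o.
  by move=> o; rewrite marg_eq; apply: sumr_ge0 => y _; apply: joint_ge0.
have h1 : (1 / 2 : C) < marg e P u x (f x u).
  apply: (lt_le_trans (Hp x Dx)); rewrite marg_eq.
  apply: (@sum_ge_term {ffun 'I_n -> Sigma} (fun y => y u == f x u) (fun y => qprob e P x y) (f x)) => //.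
  by move=> i _; apply: joint_ge0.
have h2 : (1 / 2 : C) < marg e P u x (f x' u).
  rewrite (marg_local HKon HKcomp _ P1 agr).
  apply: (lt_le_trans (Hp x' Dx')); rewrite marg_eq.
  apply: (@sum_ge_term {ffun 'I_n -> Sigma} (fun y => y u == f x' u) (fun y => qprob e P x' y) (f x')) => //.
  by move=> i _; apply: joint_ge0.
case: (eqVneq (f x u) (f x' u)) => // neq.
have := @sum_ge_two _ (fun o => marg e P u x o) _ _ neq mge0.
rewrite sum_marg => H.
have : (1 : C) < 1.
  apply: (lt_le_trans _ H).
  have -> : (1 : C) = 1 / 2 + 1 / 2 by rewrite -splitr.
  exact: ltrD.
by rewrite ltxx.
Qed.

End Main.

Section Classical.
Variables (n : nat) (e : rel 'I_n) (Sigma : finType)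
  (D : pred {ffun 'I_n -> Sigma}) (f : {ffun 'I_n -> Sigma} -> {ffun 'I_n -> Sigma}).

Definition CSt := (Sigma * {ffun 'I_n -> option Sigma})%type.

Definition getk (msgs : 'I_n -> option CSt) (w : 'I_n) : option Sigma :=
  match [pick y | if msgs y is Some m then m.2 w != None else false] with
  | Some y => if msgs y is Some m then m.2 w else None
  | None => None
  end.

Definition cQ : cprotocol n Sigma CSt CSt :=
  CProtocol
    (fun v s => (s, [ffun w => if w == v then Some s else None]))
    (fun _ _ _ st => st)
    (fun _ v st msgs => (st.1, [ffun w => if st.2 w is Some a then Some a else getk msgs w]))
    (fun u st => match [pick x' | D x' && [forall w, (st.2 w == None) || (st.2 w == Some (x' w))]] with
                 | Some x' => f x' u
                 | None => st.1 end).

Lemma cstateE (x : 'I_n -> Sigma) t v :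
  cstate e cQ x t v = (x v, [ffun w => if w \in know e t v then Some (x w) else None]).
Proof.
elim: t v => [|t IH] v /=.
  congr pair; apply/ffunP => w; rewrite !ffunE inE; by case: eqP => [->|].
rewrite IH /=; congr (_, _); apply/ffunP => w; rewrite !ffunE inE.
case wk: (w \in know e t v) => //=.
rewrite /getk; case: pickP => [y | ] /=.
  rewrite IH; case: ifP => // eyv; rewrite ffunE.
  case: ifP => // wy _.
  by have -> : w \in \bigcup_(y0 | e y0 v) know e t y0 by apply/bigcupP; exists y.
move=> H; case: ifP => // /bigcupP [y eyv wy].
by move: (H y); rewrite IH eyv /= ffunE wy.
Qed.

End Classical.

Unset Implicit Arguments.
Local Close Scope ring_scope.

Theorem mainTheorem7 (n : nat) (e : rel 'I_n) (e_sym : symmetric e)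
    (e_irr : irreflexive e) (Sigma : finType) (D : pred {ffun 'I_n -> Sigma})
    (f : {ffun 'I_n -> Sigma} -> {ffun 'I_n -> Sigma}) (T : nat)
    (P : qprotocol n T Sigma) :
  qvalid e P ->
  (forall x, D x -> ((1 / 2 : C) < qprob e P x (f x))%R) ->
  exists (M St : Type) (Q : cprotocol n Sigma M St),
    forall x, D x -> forall u, crun e Q T x u = f x u.
Proof.
move=> HV Hp.
exists (CSt n Sigma), (CSt n Sigma), (cQ D f) => x Dx u.
rewrite /crun cstateE /=.
case: pickP => [x' /andP[Dx' /forallP cons] | H].
  apply: esym; apply: (qlocal HV Hp Dx Dx').
  move=> v vk; move: (cons v); rewrite ffunE vk /=.
  by move=> /eqP [].
exfalso; move: (H x); rewrite Dx /=.
move/negP; apply; apply/forallP => w; rewrite ffunE.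
by case: ifP => _; rewrite ?eqxx ?orbT.
Qed.
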